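(* Let $n\ge 1$ and $k\ge 0$ be integers, and let $C_n=\{v_0,\dots,v_{n-1}\}$ with metric $d(v_i,v_j)=\min\{|i-j|,n-|i-j|\}$. For indices taken modulo $n$, put $\sigma_i=\{v_i,v_{i+1},\dots,v_{i+k}\}$, $\sigma_i'=\{v_i,v_{i+k},v_{i+2k}\}$ and $\sigma_i''=\{v_i,v_{i+k},v_{i+2k-1},v_{i+2k}\}$. Then the set of maximal simplices of $\mathrm{VR}(C_n;k)$ is $\{\sigma_i: 0\le i\le n-1\}$ if $n>3k$; $\{\sigma_i: 0\le i\le n-1\}\cup\{\sigma_i': 0\le i\le n-1\}$ if $n=3k$ and $k\ge 2$; $\{\sigma_i: 0\le i\le n-1\}\cup\{\sigma_i'': 0\le i\le n-1\}$ if $n=3k-1$ and $k\ge 3$.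
   Context: $\mathrm{VR}(X;r)$ is the simplicial complex on vertex set $X$ whose simplices are the finite nonempty subsets of diameter at most $r$; a maximal simplex is one not properly contained in another simplex. *)

(* Defs.v *)
From mathcomp Require Import all_boot all_order.
Set Implicit Arguments. Unset Strict Implicit. Unset Printing Implicit Defensive.

Definition cdist (n i j : nat) : nat :=
  let a := if i <= j then j - i else i - j in minn a (n - a).

Definition vr_simplex (n k : nat) (s : {set 'I_n}) : bool :=
  (s != set0) && [forall x in s, forall y in s, cdist n x y <= k].

Definition vr_maximal (n k : nat) (s : {set 'I_n}) : bool :=
  vr_simplex k s && [forall t : {set 'I_n}, (s \proper t) ==> ~~ vr_simplex k t].

Definition sigma (n k i : nat) : {set 'I_n} :=
  [set x : 'I_n | [exists t : 'I_k.+1, (x : nat) == (i + t) %% n]].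

Definition sigma' (n k i : nat) : {set 'I_n} :=
  [set x : 'I_n | [|| (x : nat) == i %% n, (x : nat) == (i + k) %% n
                    | (x : nat) == (i + 2 * k) %% n]].

Definition sigma'' (n k i : nat) : {set 'I_n} :=
  [set x : 'I_n | [|| (x : nat) == i %% n, (x : nat) == (i + k) %% n,
                    (x : nat) == (i + 2 * k - 1) %% n
                  | (x : nat) == (i + 2 * k) %% n]].

(* Main.v *)
Require Import Defs.
From mathcomp Require Import all_boot all_order.
From mathcomp Require Import zify.
Set Implicit Arguments. Unset Strict Implicit. Unset Printing Implicit Defensive.

Definition off (n c w : nat) : nat := if c <= w then w - c else w + n - c.

Lemma off_cases n c w :
  (c <= w /\ off n c w = w - c) \/ (w < c /\ off n c w = w + n - c).
Proof. rewrite /off; case: leqP => h; [left|right]; split => //. Qed.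

Lemma cle n a b k : cdist n a b <= k <->
  ((a <= b /\ (b - a <= k \/ n - (b - a) <= k)) \/
   (b < a /\ (a - b <= k \/ n - (a - b) <= k))).
Proof.
rewrite /cdist; case: leqP => h; rewrite geq_min; split.
- by case/orP => H; left; split => //; [left|right].
- case => [[_ [H|H]]|[H _]]; [by rewrite H | by rewrite H orbT | lia].
- by case/orP => H; right; split => //; [left|right].
- case => [[H _]|[_ [H|H]]]; [lia | by rewrite H | by rewrite H orbT].
Qed.

Lemma off_lt n c w : c < n -> w < n -> off n c w < n.
Proof. move=> *; have := off_cases n c w; lia. Qed.

Lemma cdist_off n c w w' k : c < n -> w < n -> w' < n ->
  (cdist n w w' <= k <-> cdist n (off n c w) (off n c w') <= k).
Proof.
move=> hc hw hw'; case: (off_cases n c w) => [[h1 ->]|[h1 ->]];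
case: (off_cases n c w') => [[h2 ->]|[h2 ->]]; rewrite !cle;
split => [[[? [?|?]]|[? [?|?]]]|[[? [?|?]]|[? [?|?]]]]; lia.
Qed.

Lemma off_trans n c i w : c < n -> i < n -> w < n ->
  off n i w = off n (off n c i) (off n c w).
Proof.
move=> *; have := off_cases n c i; have := off_cases n c w;
have := off_cases n i w; have := off_cases n (off n c i) (off n c w); lia.
Qed.

Lemma eq_mod n i j w : 0 < n -> i < n -> j < n -> w < n ->
  (w == (i + j) %% n) = (off n i w == j).
Proof.
move=> hn hi hj hw.
have -> : (i + j) %% n = if i + j < n then i + j else i + j - n.
  case: ltnP => h; first by rewrite modn_small.
  rewrite -{1}(subnK h) modnDr modn_small //; lia.
apply/eqP/eqP; have := off_cases n i w; case: (ltnP (i + j) n) => h /=; lia.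
Qed.

Definition pt n (hn : 0 < n) (x : nat) : 'I_n := Ordinal (ltn_pmod x hn).

Lemma off_pt n (hn : 0 < n) i j : i < n -> j < n -> off n i (pt hn (i + j)) = j.
Proof. move=> hi hj; apply/eqP; rewrite -eq_mod //; exact: ltn_ord. Qed.

Lemma mem_sigma n (hn : 0 < n) k i (w : 'I_n) : i < n -> k < n ->
  (w \in sigma n k i) <-> off n i w <= k.
Proof.
move=> hi hk; rewrite inE; split.
- case/existsP => t /eqP E.
  have ht : t < n by have := ltn_ord t; lia.
  have : off n i w == t by rewrite -eq_mod // ?E //; exact: ltn_ord.
  by move/eqP => ->; rewrite -ltnS.
- move=> h; apply/existsP; exists (Ordinal (h : off n i w < k.+1)) => /=.
  by rewrite eq_mod // ?off_lt //; exact: ltn_ord.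
Qed.

Lemma mod0 n (hn : 0 < n) i (w : 'I_n) : i < n -> (val w == i %% n) = (off n i w == 0).
Proof. by move=> hi; rewrite -(eq_mod hn hi hn (ltn_ord w)) addn0. Qed.

Lemma mem_sigma' n (hn : 0 < n) k i (w : 'I_n) : i < n -> 2 * k < n ->
  (w \in sigma' n k i) <->
  (off n i w = 0 \/ off n i w = k \/ off n i w = 2 * k).
Proof.
move=> hi hk; have hw := ltn_ord w; rewrite inE mod0 // !eq_mod //; try (by lia).
Qed.

Lemma mem_sigma'' n (hn : 0 < n) k i (w : 'I_n) : i < n -> 2 * k < n -> 1 <= k ->
  (w \in sigma'' n k i) <->
  (off n i w = 0 \/ off n i w = k \/ off n i w = 2 * k - 1 \/ off n i w = 2 * k).
Proof.
move=> hi hk hk1; rewrite inE mod0 //.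
have -> : i + 2 * k - 1 = i + (2 * k - 1) by lia.
have hw := ltn_ord w; rewrite !eq_mod //; try (by lia).
Qed.

Lemma simplexP n k (s : {set 'I_n}) : vr_simplex k s <->
  (exists w, w \in s) /\ (forall x y, x \in s -> y \in s -> cdist n x y <= k).
Proof.
rewrite /vr_simplex; split.
- case/andP => /set0Pn [w hw] /forallP H; split; first by exists w.
  by move=> x y hx hy; move: (H x) => /implyP/(_ hx)/forallP/(_ y)/implyP/(_ hy).
- case=> [[w hw] H]; apply/andP; split; first by apply/set0Pn; exists w.
  apply/forallP => x; apply/implyP => hx; apply/forallP => y; apply/implyP => hy.
  exact: H.
Qed.

Lemma maximalP n k (s : {set 'I_n}) : vr_maximal k s <->
  vr_simplex k s /\ (forall t : {set 'I_n}, s \proper t -> ~ vr_simplex k t).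
Proof.
rewrite /vr_maximal; split => [/andP [h /forallP H]|[h H]].
- by split => // t hp; apply/negP; exact: (implyP (H t) hp).
- by apply/andP; split => //; apply/forallP => t; apply/implyP => hp; apply/negP; exact: H.
Qed.

Lemma fam_max n (hn : 0 < n) k i (M : {set 'I_n}) (Q : nat -> Prop) :
  i < n ->
  (forall w : 'I_n, w \in M <-> Q (off n i w)) ->
  Q 0 ->
  (forall a b, a < n -> b < n -> Q a -> Q b -> cdist n a b <= k) ->
  (forall m, m < n -> ~ Q m -> (forall j, j < n -> Q j -> cdist n m j <= k) -> False) ->
  vr_maximal k M.
Proof.
move=> hi HM H0 Hpair Hblock; apply/maximalP; split.
- apply/simplexP; split.
  + by exists (pt hn (i + 0)); apply/HM; rewrite off_pt.
  + move=> x y /HM hx /HM hy.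
    apply/(cdist_off k hi (ltn_ord x) (ltn_ord y)).
    by apply: Hpair => //; apply: off_lt => //; exact: ltn_ord.
- move=> t /properP [sub [w wt wM]] /simplexP [_ Ht].
  apply: (Hblock (off n i w)); first by apply: off_lt => //; exact: ltn_ord.
    by move/HM => h; rewrite h in wM.
  move=> j hj qj.
  have pM : pt hn (i + j) \in M by apply/HM; rewrite off_pt.
  have := Ht w _ wt (subsetP sub _ pM).
  by move/(cdist_off k hi (ltn_ord w) (ltn_ord _)); rewrite off_pt.
Qed.

Lemma max_eq n k (s M : {set 'I_n}) :
  vr_maximal k s -> vr_maximal k M -> s \subset M -> s = M.
Proof.
move=> /maximalP [_ Hs] /maximalP [hM _] sub.
case: (eqVneq s M) => // ne; exfalso; apply: (Hs M) => //.
by rewrite properEneq ne sub.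
Qed.

Lemma cleR n a b k : b <= a -> cdist n a b <= k -> a - b <= k \/ n - (a - b) <= k.
Proof. by move=> h /cle; lia. Qed.

Lemma cleL n a b k : a <= b -> cdist n a b <= k -> b - a <= k \/ n - (b - a) <= k.
Proof. by move=> h /cle; lia. Qed.

Lemma cleI n a b k : (a <= b /\ (b - a <= k \/ n - (b - a) <= k)) \/
   (b < a /\ (a - b <= k \/ n - (a - b) <= k)) -> cdist n a b <= k.
Proof. by move/cle. Qed.

Lemma sigma_max n (hn : 0 < n) k i : i < n ->
  (3 * k < n \/ (n = 3 * k /\ 2 <= k) \/ (n = 3 * k - 1 /\ 3 <= k)) ->
  vr_maximal k (sigma n k i).
Proof.
move=> hi hc; have hk : k < n by lia.
apply: (@fam_max n hn k i _ (fun m => m <= k)) => //.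
- by move=> w; apply: mem_sigma.
- by move=> a b ha hb qa qb; apply: cleI; case: (leqP a b) => h; [left|right]; lia.
- move=> m hm hQ H.
  have h0 := H 0 hn (leq0n k).
  have h1 := H k hk (leqnn k).
  have h2 := H (minn 1 k) ltac:(lia) (geq_minr 1 k).
  have h3 := H (k - 1) ltac:(lia) (leq_subr 1 k).
  case: (@cleR n m 0 k ltac:(lia) h0) => g0; case: (@cleR n m k k ltac:(lia) h1) => g1;
  case: (@cleR n m (minn 1 k) k ltac:(lia) h2) => g2; case: (@cleR n m (k-1) k ltac:(lia) h3) => g3;
  case: hc => [hc|[[hc1 hc2]|[hc1 hc2]]]; lia.
Qed.

Ltac dc h := case/cle: h => [[? [?|?]]|[? [?|?]]].

Lemma sigma'_max n (hn : 0 < n) k i : i < n -> n = 3 * k -> 2 <= k ->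
  vr_maximal k (sigma' n k i).
Proof.
move=> hi hn3 hk2; have hk : 2 * k < n by lia.
apply: (@fam_max n hn k i _ (fun m => m = 0 \/ m = k \/ m = 2 * k)) => //.
- by move=> w; apply: mem_sigma'.
- by left.
- move=> a b ha hb qa qb; apply: cleI.
  case: qa => [->|[->|->]]; case: qb => [->|[->|->]]; lia.
- move=> m hm hQ H.
  have h0 := H 0 hn ltac:(lia).
  have h1 := H k ltac:(lia) ltac:(lia).
  have h2 := H (2 * k) ltac:(lia) ltac:(lia).
  dc h0; dc h1; dc h2; lia.
Qed.

Lemma sigma''_max n (hn : 0 < n) k i : i < n -> n = 3 * k - 1 -> 3 <= k ->
  vr_maximal k (sigma'' n k i).
Proof.
move=> hi hn3 hk2; have hk : 2 * k < n by lia.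
apply: (@fam_max n hn k i _
   (fun m => m = 0 \/ m = k \/ m = 2 * k - 1 \/ m = 2 * k)) => //.
- by move=> w; apply: mem_sigma''; lia.
- by left.
- move=> a b ha hb qa qb; apply: cleI.
  case: qa => [->|[->|[->|->]]]; case: qb => [->|[->|[->|->]]]; lia.
- move=> m hm hQ H.
  have h0 := H 0 hn ltac:(lia).
  have h1 := H k ltac:(lia) ltac:(lia).
  have h2 := H (2 * k - 1) ltac:(lia) ltac:(lia).
  have h3 := H (2 * k) ltac:(lia) ltac:(lia).
  dc h0; dc h1; dc h2; dc h3; lia.
Qed.

Lemma window n (hn : 0 < n) k (s : {set 'I_n}) : k < n -> vr_simplex k s ->
  exists c, exists x z y : 'I_n, [/\ c < n, x \in s, z \in s, y \in s & off n c x = k /\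
    forall w : 'I_n, w \in s -> off n c z <= off n c w <= off n c y].
Proof.
move=> hk /simplexP [[x xs] Hs].
have hc : off n k x < n by apply: off_lt => //; exact: ltn_ord.
case: (@arg_minnP _ x (fun w => w \in s) (off n (off n k x)) xs) => z zs zmin.
case: (@arg_maxnP _ x (fun w => w \in s) (off n (off n k x)) xs) => y ys ymax.
exists (off n k x), x, z, y; split => //; split.
- have := ltn_ord x; have := off_cases n k x; have := off_cases n (off n k x) x; lia.
- by move=> w ws; apply/andP; split; [exact: zmin | exact: ymax].
Qed.

Lemma pair_off n k (s : {set 'I_n}) c (u w : 'I_n) : c < n -> vr_simplex k s ->
  u \in s -> w \in s -> cdist n (off n c u) (off n c w) <= k.
Proof.
move=> hc /simplexP [_ H] us ws.
by apply/(cdist_off k hc (ltn_ord u) (ltn_ord w)); exact: H.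
Qed.

Lemma cover1 n (hn : 0 < n) k (s : {set 'I_n}) : 3 * k < n -> vr_simplex k s ->
  exists2 i, i < n & s \subset sigma n k i.
Proof.
move=> h hs; have hk : k < n by lia.
case: (window hn hk hs) => c [x [z [y [hc xs zs ys [hx hw]]]]].
have [lak lkb] : off n c z <= k /\ k <= off n c y.
  by case/andP: (hw x xs); rewrite hx.
have dkb := pair_off hc hs xs ys; rewrite hx in dkb; move: (cleL lkb dkb) => {}dkb.
have lab : off n c z <= off n c y by lia.
have dab := cleL lab (pair_off hc hs zs ys).
have := off_lt hc (ltn_ord y) => lb.
exists z; first exact: ltn_ord.
apply/subsetP => w ws; apply/(mem_sigma hn w (ltn_ord z) hk).
rewrite (off_trans hc (ltn_ord z) (ltn_ord w)).
have [l1 l2] := andP (hw w ws).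
have := off_cases n (off n c z) (off n c w).
case: dkb => ?; case: dab => ?; lia.
Qed.

Lemma cover2 n (hn : 0 < n) k (s : {set 'I_n}) : n = 3 * k -> 2 <= k -> vr_simplex k s ->
  exists2 i, i < n & (s \subset sigma n k i \/ s \subset sigma' n k i).
Proof.
move=> h hk2 hs; have hk : k < n by lia.
case: (window hn hk hs) => c [x [z [y [hc xs zs ys [hx hw]]]]].
have [lak lkb] : off n c z <= k /\ k <= off n c y.
  by case/andP: (hw x xs); rewrite hx.
have dkb := pair_off hc hs xs ys; rewrite hx in dkb; move: (cleL lkb dkb) => {}dkb.
have lab : off n c z <= off n c y by lia.
have dab := cleL lab (pair_off hc hs zs ys).
have := off_lt hc (ltn_ord y) => lb.
have hb2 : off n c y <= 2 * k by case: dkb; lia.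
exists z; first exact: ltn_ord.
case: (leqP (off n c y - off n c z) k) => hba; [left|right];
  apply/subsetP => w ws.
- apply/(mem_sigma hn w (ltn_ord z) hk).
  rewrite (off_trans hc (ltn_ord z) (ltn_ord w)).
  have [l1 l2] := andP (hw w ws).
  have := off_cases n (off n c z) (off n c w).
  lia.
- have ha0 : off n c z = 0 by case: dab; lia.
  have hb0 : off n c y = 2 * k by case: dab; lia.
  apply/(mem_sigma' hn w (ltn_ord z)); first lia.
  rewrite (off_trans hc (ltn_ord z) (ltn_ord w)) ha0.
  have [l1 l2] := andP (hw w ws).
  have d1 := cleL l1 (pair_off hc hs zs ws).
  have d2 := cleL l2 (pair_off hc hs ws ys).
  rewrite ha0 in l1 d1; rewrite hb0 in l2 d2.
  have -> : off n 0 (off n c w) = off n c w by rewrite /off subn0.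
  case: d1 => ?; case: d2 => ?; lia.
Qed.

Lemma off_cases' n c w : c < n -> w < n ->
  (c <= w /\ off n c w + c = w) \/ (w < c /\ off n c w + c = w + n).
Proof. move=> *; have := off_cases n c w; lia. Qed.

Lemma cover3 n (hn : 0 < n) k (s : {set 'I_n}) : n = 3 * k - 1 -> 3 <= k -> vr_simplex k s ->
  exists2 i, i < n & (s \subset sigma n k i \/ s \subset sigma'' n k i).
Proof.
move=> h hk2 hs; have hk : k < n by lia.
case: (window hn hk hs) => c [x [z [y [hc xs zs ys [hx hw]]]]].
have [lak lkb] : off n c z <= k /\ k <= off n c y.
  by case/andP: (hw x xs); rewrite hx.
have dkb := pair_off hc hs xs ys; rewrite hx in dkb; move: (cleL lkb dkb) => {}dkb.
have lab : off n c z <= off n c y by lia.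
have dab := cleL lab (pair_off hc hs zs ys).
have := off_lt hc (ltn_ord y) => lb.
have hb2 : off n c y <= 2 * k by case: dkb; lia.
case: (leqP (off n c y - off n c z) k) => hba.
  exists z; first exact: ltn_ord.
  left; apply/subsetP => w ws.
  apply/(mem_sigma hn w (ltn_ord z) hk).
  rewrite (off_trans hc (ltn_ord z) (ltn_ord w)).
  have [l1 l2] := andP (hw w ws).
  have := off_cases n (off n c z) (off n c w).
  lia.
have hab : 2 * k <= off n c y - off n c z + 1 by case: dab; lia.
have hk1 : 2 * k < n by lia.
have hk0 : 1 <= k by lia.
have hn' : n + 1 = 3 * k by lia.
have F : forall w, w \in s ->
  [/\ off n c z <= off n c w, off n c w <= off n c y, off n c w < n,
      off n c w <= off n c z + k \/ off n c z + n <= off n c w + k &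
      off n c y <= off n c w + k \/ off n c w + n <= off n c y + k].
  move=> w ws; have [l1 l2] := andP (hw w ws); split => //.
  - exact: off_lt.
  - by case: (cleL l1 (pair_off hc hs zs ws)); lia.
  - by case: (cleL l2 (pair_off hc hs ws ys)); lia.
have E : forall m, (m = 0 \/ m = k \/ m = 2 * k - 1 \/ m = 2 * k) <->
   (m = 0 \/ m = k \/ m + 1 = 2 * k \/ m = 2 * k).
  by move=> m; have -> : (m = 2 * k - 1) <-> (m + 1 = 2 * k) by lia.
clear dab dkb hba h.
case: (boolP (off n c z == 1)) => [/eqP ha1|ha1].
  have hb0 : off n c y = 2 * k by lia.
  exists y; first exact: ltn_ord.
  right; apply/subsetP => w ws.
  apply/(mem_sigma'' hn w (ltn_ord y) hk1 hk0).
  rewrite (off_trans hc (ltn_ord y) (ltn_ord w)) E.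
  case: (F w ws); rewrite ha1 hb0 => l1 l2 lm d1 d2.
  case: (off_cases' (off_lt hc (ltn_ord y)) lm); rewrite hb0;
  case: d1 => ?; case: d2 => ?; lia.
case: (boolP (off n c y == 2 * k - 1)) => [/eqP hb1|hb1].
  have ha0 : off n c z = 0 by lia.
  have hb1' : off n c y + 1 = 2 * k by lia.
  exists y; first exact: ltn_ord.
  right; apply/subsetP => w ws.
  apply/(mem_sigma'' hn w (ltn_ord y) hk1 hk0).
  rewrite (off_trans hc (ltn_ord y) (ltn_ord w)) E.
  case: (F w ws); rewrite ha0 => l1 l2 lm d1 d2.
  move: (off_cases' (off_lt hc (ltn_ord y)) lm).
  move: (off n c y) hb1' l2 d2 {hb1 lab lkb lb hb2 hab} => b hb1' l2 d2.
  case => -[? ?]; case: d1 => ?; case: d2 => ?; lia.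
have ha0 : off n c z = 0 by lia.
have hb0 : off n c y = 2 * k by lia.
case: (boolP [exists w1 in s, off n c w1 == 1]).
  case/existsP => w1 /andP [w1s /eqP e1].
  exists x; first exact: ltn_ord.
  right; apply/subsetP => w ws.
  apply/(mem_sigma'' hn w (ltn_ord x) hk1 hk0).
  rewrite (off_trans hc (ltn_ord x) (ltn_ord w)) hx E.
  case: (F w ws); rewrite ha0 hb0 => l1 l2 lm d1 d2.
  have d4 := pair_off hc hs w1s ws; rewrite e1 in d4.
  case: (leqP 1 (off n c w)) => l3.
    case: (cleL l3 d4) => d4'; case: (off_cases' hk lm) => -[? ?]; case: d1 => ?; case: d2 => ?; lia.
  have m0 : off n c w = 0 by lia.
  rewrite m0 /off leqNgt hk0 /=; lia.
move/existsPn => hne.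
exists z; first exact: ltn_ord.
right; apply/subsetP => w ws.
apply/(mem_sigma'' hn w (ltn_ord z) hk1 hk0).
rewrite (off_trans hc (ltn_ord z) (ltn_ord w)) E.
case: (F w ws); rewrite ha0 hb0 => l1 l2 lm d1 d2.
have := hne w; rewrite ws /= => /eqP ne1.
have -> : off n 0 (off n c w) = off n c w by rewrite /off subn0.
case: d1 => ?; case: d2 => ?; lia.
Qed.

Theorem lemmaA1 (n k : nat) (hn : 0 < n) :
  (3 * k < n ->
     forall s : {set 'I_n}, vr_maximal k s <->
       exists2 i, i < n & s = sigma n k i)
  /\ (n = 3 * k -> 2 <= k ->
     forall s : {set 'I_n}, vr_maximal k s <->
       exists2 i, i < n & (s = sigma n k i \/ s = sigma' n k i))
  /\ (n = 3 * k - 1 -> 3 <= k ->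
     forall s : {set 'I_n}, vr_maximal k s <->
       exists2 i, i < n & (s = sigma n k i \/ s = sigma'' n k i)).
Proof.
split; [|split].
- move=> h s; split.
  + move=> hs; move/maximalP: (hs) => [hs' _].
    case: (cover1 hn h hs') => i hi sub; exists i => //.
    by apply: max_eq hs (sigma_max hn hi _) sub; left.
  + by case=> i hi ->; apply: sigma_max => //; left.
- move=> h hk s; split.
  + move=> hs; move/maximalP: (hs) => [hs' _].
    case: (cover2 hn h hk hs') => i hi [sub|sub]; exists i => //; [left|right].
    * by apply: max_eq hs (sigma_max hn hi _) sub; right; left.
    * exact: max_eq hs (sigma'_max hn hi h hk) sub.
  + case=> i hi [->|->]; first by apply: sigma_max => //; right; left.
    exact: sigma'_max.
- move=> h hk s; split.
  + move=> hs; move/maximalP: (hs) => [hs' _].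
    case: (cover3 hn h hk hs') => i hi [sub|sub]; exists i => //; [left|right].
    * by apply: max_eq hs (sigma_max hn hi _) sub; right; right.
    * exact: max_eq hs (sigma''_max hn hi h hk) sub.
  + case=> i hi [->|->]; first by apply: sigma_max => //; right; right.
    exact: sigma''_max.
Qed.
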